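(* Let $x$ and $y$ be twin vertices of a graph $G$. Then there is a maximum independent set $I_{\widehat{G}}$ of the line-incompatibility graph $\widehat{G}$ of $G$ such that $xy\in I_{\widehat{G}}$ and, for every vertex $u\in N(x)$, $xu\in I_{\widehat{G}}$ if and only if $yu\in I_{\widehat{G}}$.
   Context: All graphs are finite, simple and undirected. $N(v)$ is the neighbourhood of $v$ and $N[v]=N(v)\cup\{v\}$. Two adjacent vertices $x,y$ are twins if $N[x]=N[y]$. The line-incompatibility graph $\widehat{G}$ of $G$ has one node $uv$ for each edge $\{u,v\}$ of $G$, and two nodes are adjacent if and only if the corresponding edges are of the form $\{u,v\},\{v,w\}$ with $\{u,w\}\notin E(G)$ (their endpoints induce a $P_3$ in $G$). *)

(* Defs.v *)
From mathcomp Require Import all_boot.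
Set Implicit Arguments. Unset Strict Implicit. Unset Printing Implicit Defensive.

Definition simple_graph (T : finType) (g : rel T) :=
  symmetric g /\ irreflexive g.

Definition nbh (T : finType) (g : rel T) (v : T) : {set T} := [set u | g v u].
Definition cnbh (T : finType) (g : rel T) (v : T) : {set T} := v |: nbh g v.

Definition twins (T : finType) (g : rel T) (x y : T) :=
  g x y /\ cnbh g x = cnbh g y.

Definition edge_node (T : finType) (u v : T) : {set T} := [set u; v].

Definition lig_nodes (T : finType) (g : rel T) : {set {set T}} :=
  [set S : {set T} | [exists u, exists v, g u v && (S == edge_node u v)]].

(* Adjacency in the line-incompatibility graph: the edges are {u,v},{v,w}
   with {u,w} not an edge (u,v,w induce a P3). *)
Definition lig_adj (T : finType) (g : rel T) (S1 S2 : {set T}) : bool :=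
  [exists u, exists v, exists w,
     [&& g u v, g v w, u != w, ~~ g u w,
         S1 == edge_node u v & S2 == edge_node v w]].

Definition lig_independent (T : finType) (g : rel T) (I : {set {set T}}) :=
  (I \subset lig_nodes g) &&
  [forall S1 in I, forall S2 in I, ~~ lig_adj g S1 S2].

Definition lig_maximum_independent (T : finType) (g : rel T)
    (I : {set {set T}}) :=
  lig_independent g I /\
  forall J : {set {set T}}, lig_independent g J -> #|J| <= #|I|.

(* Main.v *)
Require Import Defs.
From mathcomp Require Import all_boot all_fingroup zify.
Set Implicit Arguments. Unset Strict Implicit. Unset Printing Implicit Defensive.

Definition sw (T : finType) (a b : T) (S : {set T}) : {set T} :=
  [set z | tperm a b z \in S].

Lemma sw_mem (T : finType) (a b : T) S z : (z \in sw a b S) = (tperm a b z \in S).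
Proof. by rewrite inE. Qed.

Lemma swK (T : finType) (a b : T) : involutive (sw a b).
Proof. by move=> S; apply/setP=> z; rewrite !inE tpermK. Qed.

Lemma en_mem (T : finType) (u v z : T) : (z \in edge_node u v) = (z == u) || (z == v).
Proof. by rewrite /edge_node !inE. Qed.

Lemma tp_eq (T : finType) (a b z u : T) : (tperm a b z == u) = (z == tperm a b u).
Proof. by apply/eqP/eqP => [<-|->]; rewrite tpermK. Qed.

Lemma sw_edge (T : finType) (a b u v : T) :
  sw a b (edge_node u v) = edge_node (tperm a b u) (tperm a b v).
Proof. by apply/setP=> z; rewrite sw_mem !en_mem !tp_eq. Qed.

Lemma tw_out (T : finType) (g : rel T) a b : twins g a b ->
  forall w, w != a -> w != b -> g a w = g b w.
Proof.
case=> _ Hc w wa wb; have := congr1 (fun A : {set T} => w \in A) Hc.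
by rewrite /cnbh /nbh !inE (negbTE wa) (negbTE wb).
Qed.

Lemma tw_g (T : finType) (g : rel T) a b : simple_graph g -> twins g a b ->
  forall u v, g (tperm a b u) (tperm a b v) = g u v.
Proof.
case=> sy ir tw u v; have ab := tw.1; have ho := tw_out tw.
have irr z : g z z = false by apply: ir.
case: tpermP => [->|->|/eqP ua /eqP ub]; case: tpermP => [->|->|/eqP va /eqP vb];
  rewrite ?irr //; try by rewrite sy.
- by rewrite ho // eq_sym.
- by rewrite -ho // eq_sym.
- by rewrite [g u b]sy [g u a]sy ho.
- by rewrite [g u b]sy [g u a]sy ho.
Qed.

Lemma adj_sw (T : finType) (g : rel T) a b S1 S2 : simple_graph g -> twins g a b ->
  lig_adj g S1 S2 -> lig_adj g (sw a b S1) (sw a b S2).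
Proof.
move=> sg tw /existsP [u /existsP [v /existsP [w /and5P [h1 h2 h3 h4 /andP [h5 h6]]]]].
apply/existsP; exists (tperm a b u); apply/existsP; exists (tperm a b v);
apply/existsP; exists (tperm a b w).
by rewrite !(tw_g sg tw) h1 h2 h4 (inj_eq (@perm_inj _ _)) h3 (eqP h5) (eqP h6) !sw_edge !eqxx.
Qed.

Lemma adj_swE (T : finType) (g : rel T) a b S1 S2 : simple_graph g -> twins g a b ->
  lig_adj g (sw a b S1) (sw a b S2) = lig_adj g S1 S2.
Proof.
move=> sg tw; apply/idP/idP; last exact: adj_sw.
by move/(adj_sw sg tw); rewrite !swK.
Qed.

Lemma node_sw (T : finType) (g : rel T) a b S : simple_graph g -> twins g a b ->
  S \in lig_nodes g -> sw a b S \in lig_nodes g.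
Proof.
move=> sg tw; rewrite !inE => /existsP [u /existsP [v /andP [h1 /eqP ->]]].
apply/existsP; exists (tperm a b u); apply/existsP; exists (tperm a b v).
by rewrite (tw_g sg tw) h1 sw_edge eqxx.
Qed.

Lemma sw_fix (T : finType) (a b : T) (S : {set T}) : (a \in S) = (b \in S) -> sw a b S = S.
Proof.
move=> e; apply/setP => z; rewrite sw_mem.
by case: tpermP => [->|->|//]; rewrite e.
Qed.

Lemma ab_iso (T : finType) (g : rel T) a b S : simple_graph g -> twins g a b ->
  ~~ lig_adj g (edge_node a b) S /\ ~~ lig_adj g S (edge_node a b).
Proof.
move=> [sy ir] tw; have ho := tw_out tw.
have irr z : g z z = false by apply: ir.
split; apply/negP => /existsP [u /existsP [v /existsP [w /and5P [h1 h2 h3 h4 /andP [h5 h6]]]]].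
- have : u \in edge_node a b by rewrite (eqP h5) en_mem eqxx.
  have : v \in edge_node a b by rewrite (eqP h5) en_mem eqxx orbT.
  rewrite !en_mem.
  have uv : u != v by apply/eqP => e; rewrite e irr in h1.
  have wv : w != v by apply/eqP => e; rewrite e irr in h2.
  case/orP => /eqP ev; case/orP => /eqP eu; subst; rewrite ?eqxx // in uv.
  + by rewrite -ho // ?(eq_sym w) // h2 in h4.
  + by rewrite ho // ?(eq_sym w) // h2 in h4.
- have : w \in edge_node a b by rewrite (eqP h6) en_mem eqxx orbT.
  have : v \in edge_node a b by rewrite (eqP h6) en_mem eqxx.
  rewrite !en_mem.
  have wv : w != v by apply/eqP => e; rewrite e irr in h2.
  have uv : u != v by apply/eqP => e; rewrite e irr in h1.
  case/orP => /eqP ev; case/orP => /eqP ew; subst; rewrite ?eqxx // in wv.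
  + by rewrite sy -ho // ?(eq_sym u) // sy h1 in h4.
  + by rewrite sy ho // ?(eq_sym u) // sy h1 in h4.
Qed.

Lemma cross (T : finType) (g : rel T) a b S1 S2 : g b a ->
  lig_adj g S1 S2 -> b \in S1 -> a \notin S1 -> a \in S2 -> b \notin S2 -> False.
Proof.
move=> gba /existsP [u /existsP [v /existsP [w /and5P [h1 h2 h3 h4 /andP [h5 h6]]]]].
rewrite (eqP h5) (eqP h6) !en_mem => bS1 aS1 aS2 bS2.
have vb : (b == v) = false by apply/negbTE; apply: contra bS2 => ->.
have va : (a == v) = false by apply/negbTE; apply: contra aS1 => ->; rewrite orbT.
rewrite vb orbF in bS1; rewrite va /= in aS2.
by move: h4; rewrite -(eqP bS1) -(eqP aS2) gba.
Qed.

Definition Sx (T : finType) (a b : T) : {set {set T}} :=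
  [set S : {set T} | (a \in S) && (b \notin S)].

Definition JJ (T : finType) (a b : T) (I : {set {set T}}) : {set {set T}} :=
  edge_node a b |: ((I :\: Sx b a) :|: (sw a b @^-1: (I :&: Sx a b))).

Lemma J_mem (T : finType) (a b : T) I S : (S \in JJ a b I) =
  [|| S == edge_node a b, (S \in I) && ~~ ((b \in S) && (a \notin S))
    | (sw a b S \in I) && ((a \in sw a b S) && (b \notin sw a b S))].
Proof. by rewrite /JJ /Sx !inE andbC. Qed.

Lemma indep_pair (T : finType) (g : rel T) I : lig_independent g I ->
  forall S1 S2, S1 \in I -> S2 \in I -> ~~ lig_adj g S1 S2.
Proof.
case/andP => _ /forallP H S1 S2 h1 h2.
by move/implyP: (H S1) => /(_ h1) /forallP /(_ S2) /implyP; apply.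
Qed.

Lemma J_indep (T : finType) (g : rel T) a b I : simple_graph g -> twins g a b ->
  lig_independent g I -> lig_independent g (JJ a b I).
Proof.
move=> sg tw hI; have hP := indep_pair hI.
have gab := tw.1; have gba : g b a by rewrite sg.1.
apply/andP; split.
  apply/subsetP => S; rewrite J_mem; case/or3P => [/eqP -> | /andP [SI _] | /andP [SI _]].
  - by rewrite inE; apply/existsP; exists a; apply/existsP; exists b; rewrite gab eqxx.
  - by move/andP: hI => [/subsetP ->].
  - by rewrite -(swK a b S); apply: node_sw => //; move/andP: hI => [/subsetP ->].
apply/forallP => S1; apply/implyP => H1; apply/forallP => S2; apply/implyP => H2.
move: H1 H2; rewrite !J_mem.
case/or3P => [/eqP -> _| /andP [I1 N1] | /andP [I1 /andP [a1 b1]]]; first by case: (ab_iso S2 sg tw).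
- case/or3P => [/eqP -> | /andP [I2 N2] | /andP [I2 /andP [a2 b2]]]; first by case: (ab_iso S1 sg tw).
  + exact: hP.
  + case e1 : ((a \in S1) && (b \notin S1)).
      move/andP: e1 => [e1 e1']; apply/negP => adj.
      apply: (cross gab adj) => //.
      * by rewrite -(swK a b S2) sw_mem tpermR.
      * by rewrite -(swK a b S2) sw_mem tpermL.
    have fx : (a \in S1) = (b \in S1) by move: e1 N1; case: (a \in S1); case: (b \in S1).
    by rewrite -(adj_swE _ _ sg tw) (sw_fix fx); apply: hP.
- case/or3P => [/eqP -> | /andP [I2 N2] | /andP [I2 /andP [a2 b2]]]; first by case: (ab_iso S1 sg tw).
  + case e2 : ((a \in S2) && (b \notin S2)).
      move/andP: e2 => [e2 e2']; apply/negP => adj.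
      apply: (cross gba adj) => //.
      * by rewrite -(swK a b S1) sw_mem tpermR.
      * by rewrite -(swK a b S1) sw_mem tpermL.
    have fx : (a \in S2) = (b \in S2) by move: e2 N2; case: (a \in S2); case: (b \in S2).
    by rewrite -(adj_swE _ _ sg tw) (sw_fix fx); apply: hP.
  + by rewrite -(adj_swE _ _ sg tw); apply: hP.
Qed.

Lemma J_sym (T : finType) (g : rel T) a b (I : {set {set T}}) u : simple_graph g -> twins g a b ->
  u != a -> u != b ->
  (edge_node a u \in JJ a b I) = (edge_node b u \in JJ a b I).
Proof.
move=> sg tw ua ub.
have ab : a != b by apply/eqP => e; have := tw.1; rewrite e sg.2.
have s1 : sw a b (edge_node a u) = edge_node b u
  by rewrite sw_edge tpermL tpermD // eq_sym.
have s2 : sw a b (edge_node b u) = edge_node a u by rewrite -s1 swK.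
have m1 : a \in edge_node a u by rewrite en_mem eqxx.
have m2 : b \in edge_node a u = false by rewrite en_mem eq_sym (negbTE ab) eq_sym (negbTE ub).
have m3 : a \in edge_node b u = false by rewrite en_mem (negbTE ab) eq_sym (negbTE ua).
have m4 : b \in edge_node b u by rewrite en_mem eqxx.
have e1 : (edge_node a u == edge_node a b) = false.
  by apply/negbTE/eqP => e; move: m2; rewrite e en_mem eqxx orbT.
have e2 : (edge_node b u == edge_node a b) = false.
  by apply/negbTE/eqP => e; move: m3; rewrite e en_mem eqxx.
by rewrite !J_mem s1 s2 e1 e2 m1 m2 m3 m4 /= !andbT !andbF orbF.
Qed.

Lemma J_card (T : finType) (a b : T) (I : {set {set T}}) : a != b ->
  #|I| + #|I :&: Sx a b| <= #|JJ a b I| + #|I :&: Sx b a|.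
Proof.
move=> ab.
have c1 : #|(I :\: Sx b a) :|: (sw a b @^-1: (I :&: Sx a b))| <= #|JJ a b I|.
  by apply: subset_leq_card; apply: subsetUr.
have c2 : (I :\: Sx b a) :&: (sw a b @^-1: (I :&: Sx a b)) = set0.
  apply/setP => S; rewrite /Sx !inE tpermL tpermR.
  by case: (a \in S); case: (b \in S); rewrite ?andbF ?andbT.
have c3 : #|sw a b @^-1: (I :&: Sx a b)| = #|I :&: Sx a b|.
  by apply: card_preimset; apply: (can_inj (swK a b)).
have c4 := cardsID (Sx b a) I.
move: c1; rewrite cardsU c2 cards0 c3 subn0.
lia.
Qed.

Lemma exists_max (T : finType) (g : rel T) : exists I, lig_maximum_independent g I.
Proof.
have h0 : lig_independent g set0.
  by rewrite /lig_independent sub0set; apply/forallP => S; rewrite in_set0.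
case: (arg_maxnP (fun I : {set {set T}} => #|I|) h0) => I HI Hmax.
by exists I; split => // J HJ; apply: Hmax.
Qed.

Theorem lemma6 (T : finType) (g : rel T) (x y : T) :
  simple_graph g -> twins g x y ->
  exists I : {set {set T}},
    [/\ lig_maximum_independent g I,
        edge_node x y \in I &
        forall u, u \in nbh g x -> u != y ->
          (edge_node x u \in I) = (edge_node y u \in I)].
Proof.
move=> sg tw.
have tw' : twins g y x by split; [rewrite sg.1; exact: tw.1 | rewrite tw.2].
have xy : x != y by apply/eqP => e; have := tw.1; rewrite e sg.2.
case: (exists_max g) => I [HI Hmax].
have i1 := J_indep sg tw HI; have i2 := J_indep sg tw' HI.
have yx : y != x by rewrite eq_sym.
have k1 := J_card I xy; have k2 := J_card I yx.
have en : edge_node y x = edge_node x y by rewrite /edge_node setUC.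
have ux u : u \in nbh g x -> u != x.
  by rewrite inE => h; apply/eqP => e; move: h; rewrite e sg.2.
case: (leqP #|I| #|JJ x y I|) => c.
  exists (JJ x y I); split.
  - by split => // J HJ; apply: leq_trans (Hmax J HJ) c.
  - by rewrite J_mem eqxx.
  - by move=> u hu uy; rewrite (@J_sym _ g x y I u sg tw) //; exact: ux hu.
exists (JJ y x I); split.
- by split => // J HJ; apply: leq_trans (Hmax J HJ) _; lia.
- by rewrite -en J_mem eqxx.
- by move=> u hu uy; rewrite (@J_sym _ g y x I u sg tw') //; exact: ux hu.
Qed.
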